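(* Let $k$ be a field, $Q,q\in k^\times$, $d\ge1$ and $r\geq d$. Then for any $n\ge1$ and any $\mathbf a\in\mathbb I_n^d$, the $\mathcal H^B_{Q,q}(d)$-module $V(\mathbf a,n)$ is isomorphic to $V(\mathbf b,2r+1)$ for some $\mathbf b\in\mathbb I_{2r+1}^d$.
   Context: $\mathcal H^B_{Q,q}(d)$ is the algebra generated by $T_0,\dots,T_{d-1}$ with relations $(T_0+Q)(T_0-Q^{-1})=0$; $(T_i+q)(T_i-q^{-1})=0$ ($i>0$); $T_iT_{i+1}T_i=T_{i+1}T_iT_{i+1}$ ($i>0$); $T_0T_1T_0T_1=T_1T_0T_1T_0$; $T_iT_j=T_jT_i$ ($|i-j|>1$). For $n=2s$ let $\mathbb I_n=\{-\tfrac{2s-1}{2},\dots,-\tfrac12,\tfrac12,\dots,\tfrac{2s-1}{2}\}$ and for $n=2s+1$ let $\mathbb I_n=\{-s,\dots,s\}$; $V_n$ has basis $\{v_i:i\in\mathbb I_n\}$, and $v_{\mathbf a}=v_{a_1}\otimes\cdots\otimes v_{a_d}$. $R_q(v_i\otimes v_j)=q^{-1}v_i\otimes v_j$ if $i=j$, $v_j\otimes v_i$ if $i<j$, $v_j\otimes v_i+(q^{-1}-q)v_i\otimes v_j$ if $i>j$; $K_Q(v_i)=Q^{-1}v_i$ if $i=0$, $v_{-i}$ if $i>0$, $v_{-i}+(Q^{-1}-Q)v_i$ if $i<0$. The algebra acts on $V_n^{\otimes d}$ from the right: $T_i$ ($i>0$) by $R_q$ on factors $i,i+1$, $T_0$ by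 $K_Q$ on the first factor. The Weyl group $W^B(d)$ (Coxeter generators $s_0,\dots,s_{d-1}$) acts on $\mathbb I_n^d$ by $s_i$ ($i>0$) swapping the entries $a_i,a_{i+1}$ and $s_0$ replacing $a_1$ by $-a_1$. $V(\mathbf a,n)$ is the subspace of $V_n^{\otimes d}$ spanned by $\{v_{\sigma\mathbf a}:\sigma\in W^B(d)\}$; it is an $\mathcal H^B_{Q,q}(d)$-submodule. *)

(* Defs.v *)
From mathcomp Require Import all_boot all_order all_algebra.
Set Implicit Arguments. Unset Strict Implicit. Unset Printing Implicit Defensive.
Import GRing.Theory.
Local Open Scope ring_scope.

(* Index set I_n is encoded by 'I_n : the ordinal j stands for the element
   (2j - (n-1))/2 of I_n.  This bijection is order preserving, sends
   negation to rev_ord, and j is 0 iff 2j = n-1, positive iff 2j > n-1. *)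

Notation word n d := {ffun 'I_d -> 'I_n}.

(* vectors of V_n^{(x)d}: coordinates with respect to the basis v_a *)
Notation tens k n d := {ffun {ffun 'I_d -> 'I_n} -> GRing.Field.sort k}.

Definition sc (k : fieldType) (T : finType) (c : k) (v : {ffun T -> k}) :
  {ffun T -> k} := [ffun b => c * v b].

Section Defs.
Variables (k : fieldType) (Q q : k) (n d : nat).

Definition is_zero_idx (x : 'I_n) : bool := (x.*2 == n.-1)%N.
Definition is_pos_idx (x : 'I_n) : bool := (n.-1 < x.*2)%N.

Definition predo (t : 'I_d) : 'I_d :=
  Ordinal (leq_ltn_trans (leq_pred t) (ltn_ord t)).

(* Coxeter generator s_t of W^B(d) acting on words (t = 0 is s_0;
   t > 0 swaps the entries at 1-based positions t, t+1, i.e. 0-based t-1, t) *)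
Definition sW (t : 'I_d) (a : word n d) : word n d :=
  if t == 0 :> nat then [ffun j => if j == t then rev_ord (a t) else a j]
  else [ffun j => if j == predo t then a t
                 else if j == t then a (predo t) else a j].

Definition bvec (a : word n d) : tens k n d := [ffun b => (b == a)%:R].

Definition actB (t : 'I_d) (a : word n d) : tens k n d :=
  if t == 0 :> nat then
    let x := a t in
    if is_zero_idx x then sc Q^-1 (bvec a)
    else if is_pos_idx x then bvec (sW t a)
    else bvec (sW t a) + sc (Q^-1 - Q) (bvec a)
  else
    let x := a (predo t) in let y := a t in
    if x == y then sc q^-1 (bvec a)
    else if (x < y)%N then bvec (sW t a)
    else bvec (sW t a) + sc (q^-1 - q) (bvec a).

Definition actT (t : 'I_d) (v : tens k n d) : tens k n d :=
  \sum_(a : word n d) sc (v a) (actB t a).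

Definition inOrbit (a b : word n d) : bool :=
  connect (fun x y => [exists t : 'I_d, y == sW t x]) a b.

(* V(a,n): span of the v_{sigma a}, i.e. vectors supported on the orbit *)
Definition inVa (a : word n d) (v : tens k n d) : Prop :=
  forall c : word n d, ~~ inOrbit a c -> v c = 0.

End Defs.

Definition Hiso (k : fieldType) (Q q : k) (d n m : nat)
    (a : word n d) (b : word m d) : Prop :=
  exists f : tens k n d -> tens k m d,
    [/\ forall (c : k) (v w : tens k n d), f (sc c v + w) = sc c (f v) + f w,
        forall v, inVa a v -> inVa b (f v),
        forall v w, inVa a v -> inVa a w -> f v = f w -> v = w,
        forall w, inVa b w -> exists2 v, inVa a v & f v = w
      & forall (t : 'I_d) v, inVa a v ->
          f (actT Q q t v) = actT Q q t (f v)].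

(* Main.v *)
Require Import Defs.
From mathcomp Require Import all_boot all_order all_algebra zify.
Set Implicit Arguments. Unset Strict Implicit. Unset Printing Implicit Defensive.
Import GRing.Theory.
Local Open Scope ring_scope.

Lemma connect_inv (T : finType) (e : rel T) (P : T -> Prop) x y :
  (forall u v, e u v -> P u -> P v) -> connect e x y -> P x -> P y.
Proof.
move=> H /connectP [p pth ->]; elim: p x pth => //= z p IH x /andP[exz pz] Px.
exact: IH pz (H _ _ exz Px).
Qed.

Lemma val_rev n (x : 'I_n) : nat_of_ord (rev_ord x) = (n - x.+1)%N.
Proof. by []. Qed.

Lemma zero_rev n (x : 'I_n) : is_zero_idx x = (rev_ord x == x).
Proof.
rewrite /is_zero_idx -(inj_eq val_inj) /=.
have := ltn_ord x => ?; apply/eqP/eqP; lia.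
Qed.

Lemma pos_rev n (x : 'I_n) : is_pos_idx x = (rev_ord x < x)%N.
Proof.
rewrite /is_pos_idx val_rev.
have := ltn_ord x => ?; apply/idP/idP; lia.
Qed.

Section Phi.
Variables (n d r : nat) (a : word n d).
Hypothesis hdr : (d <= r)%N.

Definition inS (x : 'I_n) := [exists i, (x == a i) || (x == rev_ord (a i))].

Lemma inS_rev x : inS (rev_ord x) = inS x.
Proof.
apply/existsP/existsP => -[i /orP[]/eqP H]; exists i; apply/orP.
- by right; rewrite -H rev_ordK.
- by left; apply/eqP; apply: rev_ord_inj.
- by right; rewrite H.
- by left; rewrite H rev_ordK.
Qed.

Definition posS : {set 'I_n} := [set p | inS p && is_pos_idx p].
Definition cntL (x : 'I_n) := #|[set p in posS | (p <= x)%N]|.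
Definition cntR (x : 'I_n) := #|[set p in posS | (x <= rev_ord p)%N]|.

Lemma card_posS : (#|posS| <= d)%N.
Proof.
pose g i := if is_pos_idx (a i) then a i else rev_ord (a i).
have sub : posS \subset g @: [set: 'I_d].
  apply/subsetP => p; rewrite inE => /andP[/existsP[i /orP[]/eqP ->] Hp];
    apply/imsetP; exists i => //; rewrite /g.
    by rewrite Hp.
  move: Hp; rewrite pos_rev rev_ordK => Hp.
  case: ifP => //; rewrite pos_rev => H; lia.
apply: leq_trans (subset_leq_card sub) _.
by apply: leq_trans (leq_imset_card _ _) _; rewrite cardsT card_ord.
Qed.

Lemma cntL_le x : (cntL x <= r)%N.
Proof.
apply: leq_trans (leq_trans card_posS hdr).
by apply: subset_leq_card; apply/subsetP => p; rewrite inE => /andP[].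
Qed.

Lemma cntR_le x : (cntR x <= r)%N.
Proof.
apply: leq_trans (leq_trans card_posS hdr).
by apply: subset_leq_card; apply/subsetP => p; rewrite inE => /andP[].
Qed.

Definition phiv x := (r + cntL x - cntR x)%N.

Lemma phiv_lt x : (phiv x < r.*2.+1)%N.
Proof. have := cntL_le x; have := cntR_le x; rewrite /phiv; lia. Qed.

Definition phi x : 'I_(r.*2.+1) := Ordinal (phiv_lt x).

Lemma cntL_rev x : cntL (rev_ord x) = cntR x.
Proof.
rewrite /cntL /cntR; apply: eq_card => p; rewrite !inE !val_rev.
congr (_ && _); have := ltn_ord x; have := ltn_ord p => ? ?; apply/idP/idP; lia.
Qed.

Lemma cntR_rev x : cntR (rev_ord x) = cntL x.
Proof. by rewrite -cntL_rev rev_ordK. Qed.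

Lemma phi_rev x : phi (rev_ord x) = rev_ord (phi x).
Proof.
apply: val_inj; rewrite /= /phiv cntL_rev cntR_rev.
have := cntL_le x; have := cntR_le x; lia.
Qed.

Lemma phi_mono x y : inS x -> inS y -> (x < y)%N -> (phi x < phi y)%N.
Proof.
move=> Sx Sy xy; rewrite /= /phiv.
have L1 : (cntL x <= cntL y)%N.
  apply: subset_leq_card; apply/subsetP => p; rewrite !inE => /andP[-> H] /=; move: H; rewrite ?val_rev; lia.
have R1 : (cntR y <= cntR x)%N.
  apply: subset_leq_card; apply/subsetP => p; rewrite !inE => /andP[-> H] /=; move: H; rewrite ?val_rev; lia.
have := cntL_le x; have := cntR_le x; have := cntL_le y; have := cntR_le y.
case Py: (is_pos_idx y).
  have : (cntL x < cntL y)%N.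
    have sub : y |: [set p in posS | (p <= x)%N] \subset [set p in posS | (p <= y)%N].
      apply/subsetP => p; rewrite !inE => /orP[/eqP -> | /andP[-> H]] /=.
        by rewrite Sy Py leqnn.
      lia.
    apply: leq_trans (subset_leq_card sub); rewrite cardsU1.
    have -> : (y \in [set p in posS | (p <= x)%N]) = false.
      by rewrite inE leqNgt xy andbF.
    by [].
  lia.
have : (cntR y < cntR x)%N.
  have sub : rev_ord x |: [set p in posS | (y <= rev_ord p)%N] \subset
      [set p in posS | (x <= rev_ord p)%N].
    apply/subsetP => p; rewrite !inE => /orP[/eqP -> | /andP[-> H]] /=.
      rewrite inS_rev Sx /= pos_rev rev_ordK.
      move: Py; rewrite pos_rev => /negbT; rewrite -leqNgt => Py.
      move: Py; rewrite !val_rev; have := ltn_ord y; have := ltn_ord x => ? ? ?.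
      apply/andP; split; lia.
    move: H; rewrite ?val_rev; lia.
  apply: leq_trans (subset_leq_card sub); rewrite cardsU1.
  have -> : (rev_ord x \in [set p in posS | (y <= rev_ord p)%N]) = false.
    by rewrite inE rev_ordK leqNgt xy andbF.
  by [].
lia.
Qed.

Lemma phi_ltE x y : inS x -> inS y -> (phi x < phi y)%N = (x < y)%N.
Proof.
move=> Sx Sy; apply/idP/idP; last exact: phi_mono.
move=> H; case: (ltngtP x y) => // [yx|/val_inj exy].
  by have := phi_mono Sy Sx yx; lia.
by move: H; rewrite exy ltnn.
Qed.

Lemma phi_eqE x y : inS x -> inS y -> (phi x == phi y) = (x == y).
Proof.
move=> Sx Sy; apply/idP/idP => [/eqP H|/eqP -> //].
case: (ltngtP x y) => [xy|yx|/val_inj -> //].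
  by have := phi_mono Sx Sy xy; rewrite H ltnn.
by have := phi_mono Sy Sx yx; rewrite H ltnn.
Qed.

Lemma phi_zero x : inS x -> is_zero_idx (phi x) = is_zero_idx x.
Proof.
by move=> Sx; rewrite !zero_rev -phi_rev phi_eqE // inS_rev.
Qed.

Lemma phi_pos x : inS x -> is_pos_idx (phi x) = is_pos_idx x.
Proof.
by move=> Sx; rewrite !pos_rev -phi_rev phi_ltE // inS_rev.
Qed.


Definition allS (c : word n d) := forall j, inS (c j).
Definition Phi (c : word n d) : word (r.*2.+1) d := [ffun j => phi (c j)].

Lemma allS_a : allS a.
Proof. by move=> j; apply/existsP; exists j; rewrite eqxx. Qed.

Lemma allS_sW t c : allS c -> allS (sW t c).
Proof.
move=> H j; rewrite /sW; case: ifP => _; rewrite ffunE.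
  by case: ifP => _; rewrite ?inS_rev.
by case: ifP => _; [|case: ifP => _].
Qed.

Lemma allS_orb c : inOrbit a c -> allS c.
Proof.
move=> H; apply: (connect_inv (P := allS)) H allS_a.
by move=> u v /existsP[t /eqP ->]; apply: allS_sW.
Qed.

Lemma Phi_sW t c : Phi (sW t c) = sW t (Phi c).
Proof.
apply/ffunP => j; rewrite /sW; case: ifP => _; rewrite !ffunE.
  by case: ifP => _; rewrite ?ffunE ?phi_rev.
by case: ifP => _; rewrite ?ffunE //; case: ifP => _; rewrite ?ffunE.
Qed.

Lemma Phi_inj c c' : allS c -> allS c' -> Phi c = Phi c' -> c = c'.
Proof.
move=> Sc Sc' /ffunP H; apply/ffunP => j; apply/eqP.
by rewrite -phi_eqE //; have := H j; rewrite !ffunE => ->.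
Qed.

Lemma orb_step (x : word n d) t c : inOrbit x c -> inOrbit x (sW t c).
Proof.
move=> H; apply: connect_trans H (connect1 _); by apply/existsP; exists t.
Qed.

Lemma orb_step' m (x : word m d) t c : inOrbit x c -> inOrbit x (sW t c).
Proof.
move=> H; apply: connect_trans H (connect1 _); by apply/existsP; exists t.
Qed.

Lemma orbit_map c : inOrbit a c -> inOrbit (Phi a) (Phi c).
Proof.
move=> H; apply: (connect_inv (P := fun c => inOrbit (Phi a) (Phi c))) H _.
  by move=> u v /existsP[t /eqP ->] Hu; rewrite Phi_sW; apply: orb_step'.
exact: connect0.
Qed.

Lemma orbit_back w : inOrbit (Phi a) w -> exists2 c, inOrbit a c & Phi c = w.
Proof.
move=> H; apply: (connect_inv (P := fun w => exists2 c, inOrbit a c & Phi c = w)) H _.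
  move=> u v /existsP[t /eqP ->] [c Hc <-].
  by exists (sW t c); [apply: orb_step | rewrite Phi_sW].
by exists a => //; apply: connect0.
Qed.

End Phi.

Section Lin.
Variables (k : fieldType) (n m d : nat).

Section ScL.
Variable T : finType.
Implicit Types (u w : {ffun T -> k}).
Lemma scD x y u : sc x u + sc y u = sc (x + y) u.
Proof. by apply/ffunP => z; rewrite !ffunE mulrDl. Qed.
Lemma scDr x u w : sc x (u + w) = sc x u + sc x w.
Proof. by apply/ffunP => z; rewrite !ffunE mulrDr. Qed.
Lemma scA x y u : sc x (sc y u) = sc (x * y) u.
Proof. by apply/ffunP => z; rewrite !ffunE mulrA. Qed.
Lemma sc0 u : sc 0 u = 0.
Proof. by apply/ffunP => z; rewrite !ffunE mul0r. Qed.
Lemma sc0r x : sc x (0 : {ffun T -> k}) = 0.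
Proof. by apply/ffunP => z; rewrite !ffunE mulr0. Qed.
Lemma sc1 u : sc 1 u = u.
Proof. by apply/ffunP => z; rewrite !ffunE mul1r. Qed.
Lemma sc_sum (I : finType) x (F : I -> {ffun T -> k}) :
  sc x (\sum_i F i) = \sum_i sc x (F i).
Proof.
apply/ffunP => z; rewrite ffunE !sum_ffunE mulr_sumr.
by apply: eq_bigr => i _; rewrite ffunE.
Qed.
End ScL.

Definition lin (G : word n d -> tens k m d) (v : tens k n d) : tens k m d :=
  \sum_c sc (v c) (G c).

Lemma linD G x v w : lin G (sc x v + w) = sc x (lin G v) + lin G w.
Proof.
rewrite /lin sc_sum -big_split; apply: eq_bigr => c _.
by rewrite !ffunE -scD scA.
Qed.

Lemma linA G v w : lin G (v + w) = lin G v + lin G w.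
Proof. by rewrite -[v]sc1 linD !sc1. Qed.

Lemma lin0 G : lin G 0 = 0.
Proof. by rewrite /lin big1 // => c _; rewrite ffunE sc0. Qed.

Lemma linZ G x v : lin G (sc x v) = sc x (lin G v).
Proof. by rewrite -[sc x v]addr0 linD lin0 addr0. Qed.

Lemma lin_bvec G c : lin G (bvec k c) = G c.
Proof.
rewrite /lin (bigD1 c) //= big1 => [|c' /negbTE ne]; rewrite ffunE ?ne ?eqxx.
  by rewrite sc1 addr0.
by rewrite sc0.
Qed.

Lemma lin_eq G H (v : tens k n d) : (forall c, v c != 0 -> G c = H c) -> lin G v = lin H v.
Proof.
move=> E; apply: eq_bigr => c _; case: (eqVneq (v c) 0) => [->|/E->].
  by rewrite !sc0.
by [].
Qed.

Lemma lin_sum G (I : finType) (F : I -> tens k n d) (x : I -> k) :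
  lin G (\sum_c sc (x c) (F c)) = \sum_c sc (x c) (lin G (F c)).
Proof.
rewrite (big_morph (lin G) (linA G) (lin0 G)).
by apply: eq_bigr => c _; rewrite linZ.
Qed.

End Lin.

Lemma lin_comp (k : fieldType) n m p d (G : word m d -> tens k p d)
    (H : word n d -> tens k m d) v :
  lin G (lin H v) = lin (fun c => lin G (H c)) v.
Proof. rewrite [lin H v]/lin. exact: (lin_sum G H (fun c => v c)). Qed.

Section Main.
Variables (k : fieldType) (Q q : k) (n d r : nat) (a : word n d).
Hypothesis hdr : (d <= r)%N.

Local Notation Ph := (Phi a hdr).
Definition Fm (c : word n d) : tens k (r.*2.+1) d :=
  if inOrbit a c then bvec k (Ph c) else 0.
Local Notation f := (lin Fm).

Lemma PhiE c j : Ph c j = phi a hdr (c j).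
Proof. by rewrite ffunE. Qed.

Lemma actB_Phi t c : inOrbit a c -> f (actB Q q t c) = actB Q q t (Ph c).
Proof.
move=> oc; have Sc := allS_orb oc.
have Fc : f (bvec k c) = bvec k (Ph c) by rewrite lin_bvec /Fm oc.
have Fs : f (bvec k (sW t c)) = bvec k (sW t (Ph c)).
  by rewrite lin_bvec /Fm orb_step // Phi_sW.
rewrite /actB /=; case: ifP => _.
  rewrite PhiE phi_zero // phi_pos //.
  case: ifP => _; first by rewrite linZ Fc.
  by case: ifP => _; rewrite ?linA ?linZ ?Fc ?Fs.
rewrite !PhiE phi_eqE // phi_ltE //.
case: ifP => _; first by rewrite linZ Fc.
by case: ifP => _; rewrite ?linA ?linZ ?Fc ?Fs.
Qed.

Lemma fE v w : f v w = \sum_c v c * Fm c w.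
Proof. by rewrite /lin sum_ffunE; apply: eq_bigr => c _; rewrite ffunE. Qed.

Lemma f_Phi v c : inOrbit a c -> f v (Ph c) = v c.
Proof.
move=> oc; rewrite fE (bigD1 c) //= big1 => [|c' ne].
  by rewrite /Fm oc ffunE eqxx mulr1 addr0.
rewrite /Fm; case: ifP => oc'; rewrite ffunE ?mulr0 //.
case: eqP => [E|_]; last by rewrite mulr0.
by move: ne; rewrite (Phi_inj (allS_orb oc) (allS_orb oc') E) eqxx.
Qed.

Lemma f_out v w : ~~ inOrbit (Ph a) w -> f v w = 0.
Proof.
move=> nw; rewrite fE big1 // => c _; rewrite /Fm; case: ifP => oc;
  rewrite ffunE ?mulr0 //.
case: eqP => [E|_]; last by rewrite mulr0.
by move: nw; rewrite E orbit_map.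
Qed.

Lemma iso : Hiso Q q a (Ph a).
Proof.
exists f; split.
- by move=> c v w; rewrite linD.
- by move=> v _ w; apply: f_out.
- move=> v w Hv Hw E; apply/ffunP => c; case oc: (inOrbit a c).
    by rewrite -(f_Phi v oc) -(f_Phi w oc) E.
  by rewrite Hv ?oc // Hw ?oc.
- move=> w Hw; exists [ffun c => if inOrbit a c then w (Ph c) else 0].
    by move=> c /negbTE nc; rewrite ffunE nc.
  apply/ffunP => w'; case ow: (inOrbit (Ph a) w').
    have [c oc <-] := orbit_back ow.
    by rewrite f_Phi // ffunE oc.
  by rewrite f_out ?ow // Hw ?ow.
- move=> t v Hv.
  have actE : forall m (u : tens k m d), actT Q q t u = lin (actB Q q t) u.
    by move=> m0 u; rewrite /actT /lin.
  rewrite !actE !lin_comp; apply: lin_eq => c vc.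
  have oc : inOrbit a c by apply: contraNT vc => /Hv ->.
  by rewrite actB_Phi // /Fm oc lin_bvec.
Qed.

End Main.

Theorem lemma2p15 (k : fieldType) (Q q : k) (d r : nat) :
  Q != 0 -> q != 0 -> (1 <= d)%N -> (d <= r)%N ->
  forall (n : nat) (a : word n d), (1 <= n)%N ->
  exists b : word (r.*2.+1) d, Hiso Q q a b.
Proof.
move=> _ _ _ hdr n a _; exists (Phi a hdr a); exact: iso.
Qed.
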